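(* Let $Q_k^A,Q_k^B$ be the SDQ iterates and $w_k^A,w_k^B$ the associated noise vectors (see context). Define the lower comparison system \[ Q_{k+1}^{A_L}-Q^*=(I+\alpha\gamma DP\Pi_{Q^*}-\alpha D)(Q_k^{A_L}-Q^* )+\alpha\gamma DP(\Pi_{Q_k^B}-\Pi_{Q^*})(Q_k^A-Q_k^B)+\alpha w_k^A, \] \[ Q_{k+1}^{B_L}-Q^*=(I+\alpha\gamma DP\Pi_{Q^*}-\alpha D)(Q_k^{B_L}-Q^* )+\alpha\gamma DP(\Pi_{Q^*}-\Pi_{Q_k^A})(Q_k^A-Q_k^B)+\alpha w_k^B, \] with arbitrary initial vectors $Q_0^{A_L},Q_0^{B_L}\in\mathbb{R}^{|\mathcal{S}||\mathcal{A}|}$. Suppose $Q_0^{A_L}-Q^*\le Q_0^A-Q^*$ and $Q_0^{B_L}-Q^*\le Q_0^B-Q^*$ element-wise. Then for all $k\ge0$, $Q_k^{A_L}-Q^*\le Q_k^A-Q^*$ and $Q_k^{B_L}-Q^*\le Q_k^B-Q^*$ element-wise.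
   Context: Finite MDP with states $\mathcal{S}=\{1,\dots,|\mathcal{S}|\}$, actions $\mathcal{A}=\{1,\dots,|\mathcal{A}|\}$, transitions $P(s'|s,a)$, bounded deterministic reward $r(s,a,s')$, discount $\gamma\in(0,1)$, optimal action-value function $Q^*$. Sampling distribution $d(s,a)>0$ on $\mathcal{S}\times\mathcal{A}$; at iteration $k$, $(s_k,a_k)\sim d$ i.i.d., $s_k'\sim P(\cdot|s_k,a_k)$, $r_{k+1}=r(s_k,a_k,s_k')$. Constant step-size $\alpha\in(0,1)$. SDQ: only entry $(s_k,a_k)$ is updated, $Q_{k+1}^A(s_k,a_k)=Q_k^A(s_k,a_k)+\alpha\{r_{k+1}+\gamma Q_k^A(s_k',\arg\max_aQ_k^B(s_k',a))-Q_k^A(s_k,a_k)\}$ and symmetrically for $B$ with roles of $A,B$ swapped. Vector notation: $Q\in\mathbb{R}^{|\mathcal{S}||\mathcal{A}|}$ stacks $Q(\cdot,1),\dots,Q(\cdot,|\mathcal{A}|)$, so $Q(s,a)=(e_a\otimes e_s)^TQ$. $D$ is the diagonal matrix with entry $d(s,a)$ at position $(s,a)$. $P\in\mathbb{R}^{|\mathcal{S}||\mathcal{A}|\times|\mathcal{S}|}$ has row $(s,a)$ equal to $P(\cdot|s,a)$. $R(s,a)=\mathbb{E}[r(s,a,s')|s,a]$. For $Q$, $\pi_Q(s)=\arg\max_aQ(s,a)$ (fixed tie-breaking) and $\Pi_Q\in\mathbb{R}^{|\mathcal{S}|\times|\mathcal{S}||\mathcal{A}|}$ has $s$-th row $e_{\pi_Q(s)}^T\otimes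 e_s^T$. Noise: $w_k^A=(e_{a_k}\otimes e_{s_k})r_{k+1}+\gamma(e_{a_k}\otimes e_{s_k})e_{s_k'}^T\Pi_{Q_k^B}Q_k^A-(e_{a_k}\otimes e_{s_k})(e_{a_k}\otimes e_{s_k})^TQ_k^A-(DR+\gamma DP\Pi_{Q_k^B}Q_k^A-DQ_k^A)$, and $w_k^B$ is the same with $A$ and $B$ swapped. Inequalities between vectors are element-wise. *)

(* Defs.v *)
(* A vector in R^{|S||A|} is represented as a function S -> A -> R
   (entry (s,a) = (e_a \otimes e_s)^T Q); a vector in R^{|S|} as S -> R.
   Matrices D, P, Pi_Q are represented by the linear maps they denote. *)
From HB Require Import structures.
From mathcomp Require Import all_boot all_order all_algebra.
From mathcomp Require Import reals.
Set Implicit Arguments. Unset Strict Implicit. Unset Printing Implicit Defensive.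
Import Order.TTheory GRing.Theory Num.Theory.
Local Open Scope ring_scope.

Section SDQ.
Variables (R : realType) (S A : finType).

Definition qvec := S -> A -> R.

(* a greedy selector: greedy Q s is an argmax_a Q(s,a), with a fixed
   (arbitrary) tie-breaking rule encoded by the function itself *)
Definition is_greedy (greedy : qvec -> S -> A) :=
  forall (Q : qvec) s a, Q s a <= Q s (greedy Q s).

Definition Dop (d : qvec) (x : qvec) : qvec := fun s a => d s a * x s a.
Definition Pop (P : S -> A -> S -> R) (v : S -> R) : qvec :=
  fun s a => \sum_(s' : S) P s a s' * v s'.
Definition Piop (greedy : qvec -> S -> A) (Q : qvec) (x : qvec) : S -> R :=
  fun s => x s (greedy Q s).

Definition vadd (x y : qvec) : qvec := fun s a => x s a + y s a.
Definition vsub (x y : qvec) : qvec := fun s a => x s a - y s a.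
Definition vscale (c : R) (x : qvec) : qvec := fun s a => c * x s a.
Definition vle (x y : qvec) : Prop := forall s a, x s a <= y s a.

Definition Rexp (P : S -> A -> S -> R) (r : S -> A -> S -> R) : qvec :=
  fun s a => \sum_(s' : S) P s a s' * r s a s'.

(* Q* : the optimal action-value function, characterised as the solution of
   the Bellman optimality equation Q*(s,a) = R(s,a) + gamma sum_s' P(s'|s,a) max_a' Q*(s',a') *)
Definition bellman_optimal (greedy : qvec -> S -> A) (P : S -> A -> S -> R)
  (r : S -> A -> S -> R) (gamma : R) (Qs : qvec) : Prop :=
  forall s a, Qs s a = Rexp P r s a + gamma * \sum_(s' : S) P s a s' * Qs s' (greedy Qs s').

Variables (greedy : qvec -> S -> A) (d : qvec) (P : S -> A -> S -> R)
  (r : S -> A -> S -> R) (gamma alpha : R)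
  (sk : nat -> S) (ak : nat -> A) (sk' : nat -> S).

Definition ek (k : nat) : qvec := fun s a => if (s == sk k) && (a == ak k) then 1 else 0.

Definition sdq_upd (k : nat) (QA QB : qvec) : qvec := fun s a =>
  if (s == sk k) && (a == ak k) then
    QA s a + alpha * (r (sk k) (ak k) (sk' k) + gamma * QA (sk' k) (greedy QB (sk' k)) - QA s a)
  else QA s a.

Fixpoint sdq (QA0 QB0 : qvec) (k : nat) : qvec * qvec :=
  match k with
  | 0 => (QA0, QB0)
  | k'.+1 => let: (qa, qb) := sdq QA0 QB0 k' in (sdq_upd k' qa qb, sdq_upd k' qb qa)
  end.

(* noise w_k (for w_k^A take QA = Q_k^A, QB = Q_k^B; for w_k^B swap) :
   e r_{k+1} + gamma e e_{s'}^T Pi_{QB} QA - e e^T QA - (D R + gamma D P Pi_{QB} QA - D QA) *)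
Definition noise (k : nat) (QA QB : qvec) : qvec := fun s a =>
  ek k s a * r (sk k) (ak k) (sk' k)
  + gamma * (ek k s a * QA (sk' k) (greedy QB (sk' k)))
  - ek k s a * QA s a
  - (Dop d (Rexp P r) s a
     + gamma * Dop d (Pop P (Piop greedy QB QA)) s a
     - Dop d QA s a).

Definition Tmat (Qs : qvec) (x : qvec) : qvec := fun s a =>
  x s a + alpha * gamma * Dop d (Pop P (Piop greedy Qs x)) s a - alpha * Dop d x s a.

Definition corr (Q1 Q2 : qvec) (x : qvec) : qvec := fun s a =>
  alpha * gamma * Dop d (Pop P (fun s' => Piop greedy Q1 x s' - Piop greedy Q2 x s')) s a.

Fixpoint lower (Qs QA0 QB0 QAL0 QBL0 : qvec) (k : nat) : qvec * qvec :=
  match k with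
  | 0 => (QAL0, QBL0)
  | k'.+1 =>
    let: (qal, qbl) := lower Qs QA0 QB0 QAL0 QBL0 k' in
    let: (qa, qb) := sdq QA0 QB0 k' in
    (vadd Qs (vadd (vadd (Tmat Qs (vsub qal Qs)) (corr qb Qs (vsub qa qb)))
                   (vscale alpha (noise k' qa qb))),
     vadd Qs (vadd (vadd (Tmat Qs (vsub qbl Qs)) (corr Qs qa (vsub qa qb)))
                   (vscale alpha (noise k' qb qa))))
  end.

End SDQ.

(* Main.v *)
Require Import Defs.
From HB Require Import structures.
From mathcomp Require Import all_boot all_order all_algebra.
From mathcomp Require Import reals lra.
Import Order.TTheory GRing.Theory Num.Theory.
Local Open Scope ring_scope.
Lemma step (R : realType) (S A : finType)
  (g : qvec R S A -> S -> A) (d : qvec R S A) (P : S -> A -> S -> R)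
  (r : S -> A -> S -> R) (gamma alpha : R) (Qs : qvec R S A)
  (sk : nat -> S) (ak : nat -> A) (sk' : nat -> S) k (qa qb qal c : qvec R S A) :
  is_greedy g ->
  (forall s a, 0 < d s a) -> (forall s a, d s a <= 1) ->
  (forall s a s', 0 <= P s a s') ->
  0 < gamma < 1 -> 0 < alpha < 1 ->
  bellman_optimal g P r gamma Qs ->
  (forall s a, qal s a - Qs s a <= qa s a - Qs s a) ->
  (forall s a, c s a = alpha * gamma * d s a * \sum_(s' : S) P s a s' *
     ((qa s' (g qb s') - qb s' (g qb s')) - (qa s' (g Qs s') - qb s' (g Qs s')))) ->
  vle (vsub (vadd Qs (vadd (vadd (Tmat g d P gamma alpha Qs (vsub qal Qs)) c)
        (vscale alpha (noise g d P r gamma sk ak sk' k qa qb)))) Qs)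
      (vsub (sdq_upd g r gamma alpha sk ak sk' k qa qb) Qs).
Proof.
move=> Hg Hd Hd1 HP /andP[g0 g1] /andP[a0 a1] Hb Hl Hc s a.
have HR : Rexp P r s a = Qs s a - gamma * \sum_(s' : S) P s a s' * Qs s' (g Qs s').
  by rewrite (Hb s a); lra.
rewrite /vsub /vadd /Tmat /vscale /noise /Dop /Pop /Piop /sdq_upd /ek Hc HR.
set S1 := \sum_(s' : S) P s a s' * qa s' (g qb s').
set S2 := \sum_(s' : S) P s a s' * Qs s' (g Qs s').
set S3 := \sum_(s' : S) P s a s' * (qal s' (g Qs s') - Qs s' (g Qs s')).
set S4 := \sum_(s' : S) P s a s' * _.
have key : 0 <= S1 - S2 - S3 - S4.
  rewrite /S1 /S2 /S3 /S4 -!sumrB; apply: sumr_ge0 => s' _.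
  rewrite -!mulrBr; apply: mulr_ge0 => //.
  have := Hg qb s' (g Qs s'); have := Hl s' (g Qs s'); lra.
have h1 : 0 <= alpha * gamma * d s a * (S1 - S2 - S3 - S4).
  apply: mulr_ge0 => //; apply: mulr_ge0; [apply: mulr_ge0|]; apply: ltW => //.
have h2 : 0 <= (1 - alpha * d s a) * ((qa s a - Qs s a) - (qal s a - Qs s a)).
  apply: mulr_ge0; last by have := Hl s a; lra.
  have := Hd1 s a; have := Hd s a => ? ?.
  rewrite subr_ge0; apply: le_trans (ltW a1); rewrite -[X in _ <= X]mulr1.
  by apply: ler_wpM2l => //; apply: ltW.
case: ifP => _; lra.
Qed.

Theorem proposition2 (R : realType) (S A : finType)
  (greedy : qvec R S A -> S -> A) (d : qvec R S A) (P : S -> A -> S -> R)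
  (r : S -> A -> S -> R) (gamma alpha : R) (Qs : qvec R S A)
  (sk : nat -> S) (ak : nat -> A) (sk' : nat -> S)
  (QA0 QB0 QAL0 QBL0 : qvec R S A) :
  is_greedy greedy ->
  (forall s a, 0 < d s a) -> \sum_(s : S) \sum_(a : A) d s a = 1 ->
  (forall s a s', 0 <= P s a s') -> (forall s a, \sum_(s' : S) P s a s' = 1) ->
  0 < gamma < 1 -> 0 < alpha < 1 ->
  bellman_optimal greedy P r gamma Qs ->
  vle (vsub QAL0 Qs) (vsub QA0 Qs) -> vle (vsub QBL0 Qs) (vsub QB0 Qs) ->
  forall k : nat,
    vle (vsub (lower greedy d P r gamma alpha sk ak sk' Qs QA0 QB0 QAL0 QBL0 k).1 Qs)
        (vsub (sdq greedy r gamma alpha sk ak sk' QA0 QB0 k).1 Qs) /\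
    vle (vsub (lower greedy d P r gamma alpha sk ak sk' Qs QA0 QB0 QAL0 QBL0 k).2 Qs)
        (vsub (sdq greedy r gamma alpha sk ak sk' QA0 QB0 k).2 Qs).
Proof.
move=> Hg Hd Hsum HP HP1 Hgam Hal Hb H0A H0B k.
have Hd1 : forall s a, d s a <= 1.
  move=> s a; rewrite -Hsum (bigD1 s) //= (bigD1 a) //= -addrA lerDl.
  apply: addr_ge0; apply: sumr_ge0 => i _; first by apply: ltW.
  by apply: sumr_ge0 => j _; apply: ltW.
elim: k => [|k [IHA IHB]] //=.
case E: (lower _ _ _ _ _ _ _ _ _ _ _ _ _ _ k) IHA IHB => [qal qbl].
case F: (sdq _ _ _ _ _ _ _ _ _ k) => [qa qb] /= IHA IHB.
split.
- apply: (@step _ _ _ _ _ _ _ _ _ _ _ _ _ _ _ _ _ _ Hg Hd Hd1 HP Hgam Hal Hb IHA) => s a.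
  by rewrite /corr /Dop /Pop /Piop /vsub mulrA.
- apply: (@step _ _ _ _ _ _ _ _ _ _ _ _ _ _ _ _ _ _ Hg Hd Hd1 HP Hgam Hal Hb IHB) => s a.
  rewrite /corr /Dop /Pop /Piop /vsub mulrA; congr (_ * _).
  by apply: eq_bigr => s' _; congr (_ * _); lra.
Qed.
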